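(* Let $G$ be a finite cavity-monotone network and $t>0$. Then the cavity equation $\mathbf x=t\Gamma_G(\mathbf x)$ admits a unique solution $\mathbf x(t)\in[0,\infty)^{\vec E}$, and it is globally attractive: for every initial configuration $\mathbf x^0\in[0,\infty)^{\vec E}$, the iterates $(t\Gamma_G)^k(\mathbf x^0)$ converge to $\mathbf x(t)$ as $k\to\infty$.
   Context: Measures over subsets: for a finite set $E$, a measure is $\mu:2^E\to[0,\infty)$; $Z(\mathbf w)=\sum_{F\subseteq E}\mu(F)\mathbf w^F$, $\mathbf w^F=\prod_{e\in F}w_e$; the cavity ratio is $\Gamma^e_\mu(\mathbf w')=Z^{/e}(\mathbf w')/Z^{\setminus e}(\mathbf w')$ where $Z^{\setminus e}(\mathbf w')=\sum_{F\not\ni e}\mu(F)\mathbf w'^F$, $Z^{/e}(\mathbf w')=\sum_{F\not\ni e}\mu(F\cup\{e\})\mathbf w'^F$; for $\mathbf w\in[0,\infty)^E$ with $Z(\mathbf w)>0$, $\mathbb P^{\mathbf w}_\mu(\mathcal F=F)=\mu(F)\mathbf w^F/Z(\mathbf w)$ and $U_\mu(\mathbf w)=\mathbb E^{\mathbf w}_\mu|\mathcal F|$. $\mu$ is Rayleigh if for all $\mathbf w\in(0,\infty)^E$, $e\neq f$: $\mathbb P^{\mathbf w}_\mu(e,f\in\mathcal F)\le\mathbb P^{\mathbf w}_\mu(e\in\mathcal F)\mathbb P^{\mathbf w}_\mu(f\in\mathcal F)$; size-increasing if for all $\mathbf w\in(0,\infty)^E$, $e\in E$: $\mathbb E^{\mathbf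 w}_\mu[|\mathcal F|\mathbf 1_{e\in\mathcal F}]>\mathbb E^{\mathbf w}_\mu|\mathcal F|\,\mathbb P^{\mathbf w}_\mu(e\in\mathcal F)$; cavity-monotone if $\mu(\emptyset)>0$, Rayleigh and size-increasing. Networks: a network is a simple locally finite graph $G=(V,E)$ with, for each $i\in V$, a local measure $\mu_i$ over the subsets of $E_i$ (edges incident to $i$); it is cavity-monotone if every $\mu_i$ is. $\partial i$ is the set of neighbours of $i$. A configuration is $\mathbf x=(x_{i\to j})\in[0,\infty)^{\vec E}$ indexed by oriented edges. The cavity operator is $\Gamma_G(\mathbf x)=\mathbf y$ with $y_{i\to j}=\Gamma^{ij}_{\mu_i}(x_{k\to i}:k\in\partial i\setminus\{j\})$ (the variable of $\mu_i$ attached to edge $ik$ being set to $x_{k\to i}$). The cavity equation at activity $t>0$ is $\mathbf x=t\Gamma_G(\mathbf x)$. *)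

(* Defs.v *)
From Stdlib Require Import Reals.
From mathcomp Require Import all_boot.

Set Implicit Arguments.
Unset Strict Implicit.
Unset Printing Implicit Defensive.

Open Scope R_scope.

Section Measures.
Variable T : finType.

(* A measure over the subsets of the ground set E : {set T} is a function
   mu : {set T} -> R; only its values on subsets of E matter. *)
Definition is_measure (E : {set T}) (mu : {set T} -> R) : Prop :=
  forall F : {set T}, F \subset E -> 0 <= mu F.

Definition wpow (w : T -> R) (F : {set T}) : R := \big[Rmult/R1]_(e in F) w e.

Definition Zpart (E : {set T}) (mu : {set T} -> R) (w : T -> R) : R :=
  \big[Rplus/R0]_(F in powerset E) (mu F * wpow w F).

Definition Zcont (E : {set T}) (mu : {set T} -> R) (w : T -> R) (S : {set T}) : R :=
  \big[Rplus/R0]_(F in powerset E | S \subset F) (mu F * wpow w F).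

Definition Prob (E : {set T}) (mu : {set T} -> R) (w : T -> R) (S : {set T}) : R :=
  Zcont E mu w S / Zpart E mu w.

Definition Usize (E : {set T}) (mu : {set T} -> R) (w : T -> R) : R :=
  (\big[Rplus/R0]_(F in powerset E) (INR #|F| * mu F * wpow w F)) / Zpart E mu w.

Definition Usize_e (E : {set T}) (mu : {set T} -> R) (w : T -> R) (e : T) : R :=
  (\big[Rplus/R0]_(F in powerset E | e \in F) (INR #|F| * mu F * wpow w F))
    / Zpart E mu w.

Definition pos_weights (E : {set T}) (w : T -> R) : Prop :=
  forall e, e \in E -> 0 < w e.

Definition Rayleigh (E : {set T}) (mu : {set T} -> R) : Prop :=
  forall w, pos_weights E w ->
  forall e f, e \in E -> f \in E -> e != f ->
    Prob E mu w [set e; f] <= Prob E mu w [set e] * Prob E mu w [set f].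

Definition size_increasing (E : {set T}) (mu : {set T} -> R) : Prop :=
  forall w, pos_weights E w ->
  forall e, e \in E -> Usize_e E mu w e > Usize E mu w * Prob E mu w [set e].

Definition cavity_monotone (E : {set T}) (mu : {set T} -> R) : Prop :=
  mu set0 > 0 /\ Rayleigh E mu /\ size_increasing E mu.

Definition Zdel (E : {set T}) (mu : {set T} -> R) (e : T) (w : T -> R) : R :=
  \big[Rplus/R0]_(F in powerset E | e \notin F) (mu F * wpow w F).

Definition Zcon (E : {set T}) (mu : {set T} -> R) (e : T) (w : T -> R) : R :=
  \big[Rplus/R0]_(F in powerset E | e \notin F) (mu (e |: F) * wpow w F).

Definition cavity_ratio (E : {set T}) (mu : {set T} -> R) (e : T) (w : T -> R) : R :=
  Zcon E mu e w / Zdel E mu e w.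

End Measures.

Section Networks.
Variable V : finType.

(* A finite simple graph: symmetric irreflexive adjacency on a finite vertex
   type.  The edge set E_i incident to i is identified with the neighbourhood
   of i (edge ik <-> neighbour k). *)
Definition simple_graph (adj : rel V) : Prop :=
  (forall i j, adj i j = adj j i) /\ (forall i, ~~ adj i i).

Definition nbhd (adj : rel V) (i : V) : {set V} := [set k | adj i k].

Definition network (adj : rel V) (mu : V -> {set V} -> R) : Prop :=
  simple_graph adj /\ forall i, is_measure (nbhd adj i) (mu i).

Definition cavity_monotone_network (adj : rel V) (mu : V -> {set V} -> R) : Prop :=
  network adj mu /\ forall i, cavity_monotone (nbhd adj i) (mu i).

(* Configurations x : V -> V -> R, x i j = x_{i->j}; only values on oriented
   edges (adj i j) are meaningful. *)
Definition nonneg_config (adj : rel V) (x : V -> V -> R) : Prop :=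
  forall i j, adj i j -> 0 <= x i j.

(* cavity operator: y_{i->j} = Gamma^{ij}_{mu_i}(x_{k->i} : k in di \ {j}) *)
Definition cavity_op (adj : rel V) (mu : V -> {set V} -> R)
  (x : V -> V -> R) : V -> V -> R :=
  fun i j => cavity_ratio (nbhd adj i) (mu i) j (fun k => x k i).

Definition scaled_cavity_op (adj : rel V) (mu : V -> {set V} -> R) (t : R)
  (x : V -> V -> R) : V -> V -> R :=
  fun i j => t * cavity_op adj mu x i j.

End Networks.

(* Main.v *)
From HB Require Import structures.
Require Import Defs.
From Stdlib Require Import Reals Lra Lia Psatz FunctionalExtensionality ClassicalEpsilon.
From mathcomp Require Import all_boot zify.
Open Scope R_scope.
Set Implicit Arguments.
Unset Strict Implicit.
Unset Printing Implicit Defensive.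

Lemma Rplus_assocS : associative Rplus. Proof. move=> *; ring. Qed.
Lemma Rmult_assocS : associative Rmult. Proof. move=> *; ring. Qed.
HB.instance Definition _ := Monoid.isComLaw.Build R R0 Rplus Rplus_assocS Rplus_comm Rplus_0_l.
HB.instance Definition _ := Monoid.isComLaw.Build R R1 Rmult Rmult_assocS Rmult_comm Rmult_1_l.
HB.instance Definition _ := Monoid.isMulLaw.Build R R0 Rmult Rmult_0_l Rmult_0_r.
HB.instance Definition _ := Monoid.isAddLaw.Build R Rmult Rplus Rmult_plus_distr_r Rmult_plus_distr_l.

Section Basic.
Variable I : Type.

Lemma sum_ge0 (r : seq I) (P : pred I) (F : I -> R) :
  (forall i, P i -> 0 <= F i) -> 0 <= \big[Rplus/R0]_(i <- r | P i) F i.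
Proof. move=> H; apply: big_ind => //; [lra | move=> x y; lra]. Qed.

Lemma prod_ge0 (r : seq I) (P : pred I) (F : I -> R) :
  (forall i, P i -> 0 <= F i) -> 0 <= \big[Rmult/R1]_(i <- r | P i) F i.
Proof. move=> H; apply: big_ind => //; [lra | move=> x y; nra]. Qed.

Lemma prod_gt0 (r : seq I) (P : pred I) (F : I -> R) :
  (forall i, P i -> 0 < F i) -> 0 < \big[Rmult/R1]_(i <- r | P i) F i.
Proof. move=> H; apply: big_ind => //; [lra | move=> x y; nra]. Qed.

Lemma sum_le (r : seq I) (P : pred I) (F G : I -> R) :
  (forall i, P i -> F i <= G i) ->
  \big[Rplus/R0]_(i <- r | P i) F i <= \big[Rplus/R0]_(i <- r | P i) G i.
Proof. move=> H; apply: (big_ind2 (fun x y => x <= y)) => //; [lra| move=> *; lra]. Qed.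

Lemma Un_cv_ext (a b : nat -> R) l : (forall n, a n = b n) -> Un_cv a l -> Un_cv b l.
Proof. move=> H Ha eps He; case: (Ha eps He) => N HN; exists N => n Hn; rewrite -H; exact: HN. Qed.

Lemma cv_const (c : R) : Un_cv (fun _ => c) c.
Proof. move=> eps He; exists 0%nat => n _; rewrite /Rdist Rminus_diag Rabs_R0; lra. Qed.

Lemma sum_cv (r : seq I) (P : pred I) (F : nat -> I -> R) (G : I -> R) :
  (forall i, P i -> Un_cv (fun n => F n i) (G i)) ->
  Un_cv (fun n => \big[Rplus/R0]_(i <- r | P i) F n i) (\big[Rplus/R0]_(i <- r | P i) G i).
Proof.
move=> H; elim: r => [|a r IH].
  rewrite big_nil; apply: (Un_cv_ext _ (cv_const _)) => n; by rewrite big_nil.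
rewrite big_cons; apply: Un_cv_ext => [n|]; first by rewrite big_cons.
case: (boolP (P a)) => Pa /=; last exact: IH.
exact: CV_plus (H a Pa) IH.
Qed.

Lemma prod_cv (r : seq I) (P : pred I) (F : nat -> I -> R) (G : I -> R) :
  (forall i, P i -> Un_cv (fun n => F n i) (G i)) ->
  Un_cv (fun n => \big[Rmult/R1]_(i <- r | P i) F n i) (\big[Rmult/R1]_(i <- r | P i) G i).
Proof.
move=> H; elim: r => [|a r IH].
  rewrite big_nil; apply: (Un_cv_ext _ (cv_const _)) => n; by rewrite big_nil.
rewrite big_cons; apply: Un_cv_ext => [n|]; first by rewrite big_cons.
case: (boolP (P a)) => Pa /=; last exact: IH.
exact: CV_mult (H a Pa) IH.
Qed.
End Basic.

Section Local.
Variable T : finType.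
Implicit Types (E F G : {set T}) (w : T -> R).

Lemma wpow_ext w w' F : (forall k, k \in F -> w k = w' k) -> wpow w F = wpow w' F.
Proof. move=> H; exact: eq_bigr. Qed.

Lemma wpowU1 w f G : f \notin G -> wpow w (f |: G) = w f * wpow w G.
Proof. move=> H; by rewrite /wpow big_setU1. Qed.

Lemma wpow0 w : wpow w set0 = 1.
Proof. by rewrite /wpow big_set0. Qed.

Lemma wpow_ge0 w F : (forall k, k \in F -> 0 <= w k) -> 0 <= wpow w F.
Proof. move=> H; exact: prod_ge0. Qed.

Lemma wpow_gt0 w F : (forall k, k \in F -> 0 < w k) -> 0 < wpow w F.
Proof. move=> H; exact: prod_gt0. Qed.

Lemma wpow_scale c w F : wpow (fun k => c * w k) F = c ^ #|F| * wpow w F.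
Proof.
rewrite /wpow big_split /= big_const; congr Rmult.
by elim: #|F| => [|n IH] //=; rewrite IH.
Qed.

Lemma wpow_cv (wn : nat -> T -> R) w F :
  (forall k, k \in F -> Un_cv (fun n => wn n k) (w k)) ->
  Un_cv (fun n => wpow (wn n) F) (wpow w F).
Proof. move=> H; exact: prod_cv. Qed.

Lemma split_pow E f (P : pred {set T}) (h : {set T} -> R) : f \in E ->
  (forall G, f \notin G -> P (f |: G) = P G) ->
  \big[Rplus/R0]_(F in powerset E | P F) h F =
  \big[Rplus/R0]_(G in powerset E | P G && (f \notin G)) (h G + h (f |: G)).
Proof.
move=> fE HP.
rewrite (bigID (fun F => f \in F)) /= big_split /= Rplus_comm; congr Rplus.
  by apply: eq_bigl => F; rewrite andbA.
rewrite (reindex_onto (fun G => f |: G) (fun F => F :\ f)) /=; last first.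
  by move=> F /andP[_ fF]; rewrite setD1K.
apply: eq_bigl => G; rewrite !powersetE setU11 andbT subUset sub1set fE /=.
case fG: (f \in G) => /=.
  rewrite !andbF; apply: negbTE; apply/negP => /andP[_ /eqP HG].
  by move: fG; rewrite -HG setD11.
rewrite setU1K ?fG // eqxx !andbT HP ?fG //.
Qed.
End Local.

Section Dec.
Variable T : finType.
Variables (E : {set T}) (mu : {set T} -> R).
Implicit Types (F G : {set T}) (w : T -> R).

Lemma split_pow0 f (h : {set T} -> R) : f \in E ->
  \big[Rplus/R0]_(F in powerset E) h F =
  \big[Rplus/R0]_(G in powerset E | f \notin G) (h G + h (f |: G)).
Proof.
move=> fE; have := @split_pow T E f predT h fE (fun _ _ => erefl).
rewrite /=. have -> : \big[Rplus/R0]_(F in powerset E | predT F) h F =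
  \big[Rplus/R0]_(F in powerset E) h F by apply: eq_bigl => F; rewrite andbT.
by [].
Qed.

Lemma dsplit e f (h : {set T} -> R) : e \in E -> f \in E -> e != f ->
  \big[Rplus/R0]_(F in powerset E) h F =
  \big[Rplus/R0]_(G in powerset E | (e \notin G) && (f \notin G))
     (h G + h (e |: G) + h (f |: G) + h (e |: (f |: G))).
Proof.
move=> eE fE ef.
rewrite (split_pow0 _ eE) (@split_pow T E f (fun G => e \notin G)) //; last first.
  by move=> G _; rewrite in_setU1 negb_or ef.
by apply: eq_bigr => G _; ring.
Qed.

Definition qA e f w := \big[Rplus/R0]_(G in powerset E | (e \notin G) && (f \notin G)) (mu G * wpow w G).
Definition qB e f w := \big[Rplus/R0]_(G in powerset E | (e \notin G) && (f \notin G)) (mu (e |: G) * wpow w G).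
Definition qC e f w := \big[Rplus/R0]_(G in powerset E | (e \notin G) && (f \notin G)) (mu (f |: G) * wpow w G).
Definition qD e f w := \big[Rplus/R0]_(G in powerset E | (e \notin G) && (f \notin G)) (mu (e |: (f |: G)) * wpow w G).

Lemma Zdel_dec e f w : f \in E -> e != f -> Zdel E mu e w = qA e f w + w f * qC e f w.
Proof.
move=> fE ef; rewrite /Zdel (@split_pow T E f (fun G => e \notin G)) //; last first.
  by move=> G _; rewrite in_setU1 negb_or ef.
rewrite /qA /qC big_distrr -big_split /=; apply: eq_bigr => G /andP[_ /andP[_ fG]].
by rewrite wpowU1 //; ring.
Qed.

Lemma Zcon_dec e f w : f \in E -> e != f -> Zcon E mu e w = qB e f w + w f * qD e f w.
Proof.
move=> fE ef; rewrite /Zcon (@split_pow T E f (fun G => e \notin G)) //; last first.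
  by move=> G _; rewrite in_setU1 negb_or ef.
rewrite /qB /qD big_distrr -big_split /=; apply: eq_bigr => G /andP[_ /andP[_ fG]].
by rewrite wpowU1 //; ring.
Qed.

Lemma terms_simpl e f w G : e != f -> e \notin G -> f \notin G ->
  [/\ wpow w (e |: G) = w e * wpow w G, wpow w (f |: G) = w f * wpow w G &
      wpow w (e |: (f |: G)) = w e * (w f * wpow w G)].
Proof.
move=> ef eG fG; split; rewrite ?wpowU1 //.
by rewrite in_setU1 negb_or ef.
Qed.

Lemma Zpart_dec e f w : e \in E -> f \in E -> e != f ->
  Zpart E mu w = qA e f w + w e * qB e f w + w f * qC e f w + w e * w f * qD e f w.
Proof.
move=> eE fE ef; rewrite /Zpart (dsplit _ eE fE ef).
rewrite /qA /qB /qC /qD !big_distrr -!big_split /=; apply: eq_bigr => G /andP[_ /andP[eG fG]].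
case: (terms_simpl w ef eG fG) => -> -> ->; ring.
Qed.

Lemma Zcont_e_dec e f w : e \in E -> f \in E -> e != f ->
  Zcont E mu w [set e] = w e * qB e f w + w e * w f * qD e f w.
Proof.
move=> eE fE ef; rewrite /Zcont big_mkcondr (dsplit _ eE fE ef).
rewrite /qB /qD !big_distrr -!big_split /=; apply: eq_bigr => G /andP[_ /andP[eG fG]].
case: (terms_simpl w ef eG fG) => -> -> ->.
rewrite !sub1set !in_setU1 eqxx (negbTE eG) (negbTE ef) /=; ring.
Qed.

Lemma Zcont_f_dec e f w : e \in E -> f \in E -> e != f ->
  Zcont E mu w [set f] = w f * qC e f w + w e * w f * qD e f w.
Proof.
move=> eE fE ef; rewrite /Zcont big_mkcondr (dsplit _ eE fE ef).
rewrite /qC /qD !big_distrr -!big_split /=; apply: eq_bigr => G /andP[_ /andP[eG fG]].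
case: (terms_simpl w ef eG fG) => -> -> ->.
rewrite !sub1set !in_setU1 eqxx (negbTE fG) eq_sym (negbTE ef) /=; ring.
Qed.

Lemma Zcont_ef_dec e f w : e \in E -> f \in E -> e != f ->
  Zcont E mu w [set e; f] = w e * w f * qD e f w.
Proof.
move=> eE fE ef; rewrite /Zcont big_mkcondr (dsplit _ eE fE ef).
rewrite /qD !big_distrr /=; apply: eq_bigr => G /andP[_ /andP[eG fG]].
case: (terms_simpl w ef eG fG) => -> -> ->.
rewrite !subUset !sub1set !in_setU1 !eqxx (negbTE eG) (negbTE fG) eq_sym (negbTE ef) /=; ring.
Qed.
End Dec.

Lemma cv_inv : Un_cv (fun n => / (INR n + 1)) 0.
Proof.
move=> eps He; case: (INR_archimed eps 1 He) => N HN; exists N => n Hn.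
rewrite /Rdist Rminus_0_r.
have Hn' : INR N <= INR n by apply: le_INR; exact: Hn.
have Hp : 0 < INR n + 1 by have := pos_INR n; lra.
rewrite Rabs_right; last by apply: Rle_ge; apply: Rlt_le; apply: Rinv_0_lt_compat.
apply: (Rmult_lt_reg_l (INR n + 1)) => //; rewrite Rinv_r; last lra.
nra.
Qed.

Section Ray.
Variable T : finType.
Variables (E : {set T}) (mu : {set T} -> R).
Hypothesis Hmu : is_measure E mu.
Hypothesis Hmu0 : 0 < mu set0.
Implicit Types (F G : {set T}) (w : T -> R).

Definition nnw e f w := forall k, k \in E -> k != e -> k != f -> 0 <= w k.

Lemma q_term_ge0 e f w (X : {set T} -> {set T}) G :
  nnw e f w -> (G \in powerset E) && ((e \notin G) && (f \notin G)) ->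
  X G \subset E -> 0 <= mu (X G) * wpow w G.
Proof.
move=> Hw /andP[GE /andP[eG fG]] XE; apply: Rmult_le_pos; first exact: Hmu.
apply: wpow_ge0 => k kG; move: GE; rewrite powersetE => /subsetP GE.
apply: Hw; first exact: GE.
  by apply/eqP => ke; move: eG; rewrite -ke kG.
by apply/eqP => ke; move: fG; rewrite -ke kG.
Qed.

Lemma qA_ge e f w : nnw e f w -> mu set0 <= qA E mu e f w.
Proof.
move=> Hw; rewrite /qA (bigD1 set0) /=; last by rewrite powersetE sub0set !in_set0.
rewrite wpow0 Rmult_1_r -{1}(Rplus_0_r (mu set0)); apply: Rplus_le_compat_l.
apply: sum_ge0 => G /andP[H _]; apply: (@q_term_ge0 e f w id) => //.
by case/andP: H; rewrite powersetE.
Qed.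

Lemma qB_ge0 e f w : e \in E -> nnw e f w -> 0 <= qB E mu e f w.
Proof.
move=> eE Hw; apply: sum_ge0 => G H; apply: (@q_term_ge0 e f w (fun G => e |: G)) => //.
by case/andP: H; rewrite powersetE subUset sub1set eE => ->.
Qed.

Lemma qC_ge0 e f w : f \in E -> nnw e f w -> 0 <= qC E mu e f w.
Proof.
move=> fE Hw; apply: sum_ge0 => G H; apply: (@q_term_ge0 e f w (fun G => f |: G)) => //.
by case/andP: H; rewrite powersetE subUset sub1set fE => ->.
Qed.

Lemma qD_ge0 e f w : e \in E -> f \in E -> nnw e f w -> 0 <= qD E mu e f w.
Proof.
move=> eE fE Hw; apply: sum_ge0 => G H; apply: (@q_term_ge0 e f w (fun G => e |: (f |: G))) => //.
by case/andP: H; rewrite powersetE !subUset !sub1set eE fE => ->.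
Qed.

Lemma ray_pos e f w : Rayleigh E mu -> e \in E -> f \in E -> e != f -> pos_weights E w ->
  qA E mu e f w * qD E mu e f w <= qB E mu e f w * qC E mu e f w.
Proof.
move=> Hr eE fE ef Hw.
have Hn : nnw e f w by move=> k kE _ _; apply: Rlt_le; apply: Hw.
have := Hr w Hw e f eE fE ef; rewrite /Prob.
rewrite (Zcont_ef_dec mu w eE fE ef) (Zcont_e_dec mu w eE fE ef) (Zcont_f_dec mu w eE fE ef).
rewrite (Zpart_dec mu w eE fE ef).
have := qA_ge Hn; have := qB_ge0 eE Hn; have := qC_ge0 fE Hn; have := qD_ge0 eE fE Hn.
have := Hw e eE; have := Hw f fE.
set A := qA E mu e f w; set B := qB E mu e f w; set C := qC E mu e f w; set D := qD E mu e f w.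
set a := w e; set b := w f => Hb Ha HD HC HB HA H.
move: H; set Z := (A + a * B + b * C + a * b * D) => H.
have HZ : 0 < Z.
  rewrite /Z; have := Rmult_le_pos _ _ (Rlt_le _ _ Ha) HB; have := Rmult_le_pos _ _ (Rlt_le _ _ Hb) HC.
  have := Rmult_le_pos _ _ (Rlt_le _ _ (Rmult_lt_0_compat _ _ Ha Hb)) HD; lra.
have H2 : a * b * D * Z <= (a * B + a * b * D) * (b * C + a * b * D).
  have := Rmult_le_compat_r (Z * Z) _ _ (Rlt_le _ _ (Rmult_lt_0_compat _ _ HZ HZ)) H.
  have -> : a * b * D / Z * (Z * Z) = a * b * D * Z by field; lra.
  have -> : (a * B + a * b * D) / Z * ((b * C + a * b * D) / Z) * (Z * Z) =
     (a * B + a * b * D) * (b * C + a * b * D) by field; lra.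
  by [].
have H3 : a * b * (A * D) <= a * b * (B * C) by rewrite /Z in H2; nra.
apply: (Rmult_le_reg_l (a * b)); nra.
Qed.

Lemma q_ext e f w w' : (forall k, k \in E -> k != e -> k != f -> w k = w' k) ->
  [/\ qA E mu e f w = qA E mu e f w', qB E mu e f w = qB E mu e f w',
      qC E mu e f w = qC E mu e f w' & qD E mu e f w = qD E mu e f w'].
Proof.
move=> H.
have HG : forall G, (G \in powerset E) && ((e \notin G) && (f \notin G)) -> wpow w G = wpow w' G.
  move=> G /andP[GE /andP[eG fG]]; apply: wpow_ext => k kG.
  move: GE; rewrite powersetE => /subsetP GE; apply: H; first exact: GE.
    by apply/eqP => ke; move: eG; rewrite -ke kG.
  by apply/eqP => ke; move: fG; rewrite -ke kG.
by split; apply: eq_bigr => G HG'; rewrite HG.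
Qed.

Lemma q_cv e f (wn : nat -> T -> R) w : (forall k, k \in E -> Un_cv (fun n => wn n k) (w k)) ->
  [/\ Un_cv (fun n => qA E mu e f (wn n)) (qA E mu e f w),
      Un_cv (fun n => qB E mu e f (wn n)) (qB E mu e f w),
      Un_cv (fun n => qC E mu e f (wn n)) (qC E mu e f w) &
      Un_cv (fun n => qD E mu e f (wn n)) (qD E mu e f w)].
Proof.
move=> H.
have HG : forall X G, (G \in powerset E) && ((e \notin G) && (f \notin G)) ->
    Un_cv (fun n => mu X * wpow (wn n) G) (mu X * wpow w G).
  move=> X G /andP[GE _]; apply: CV_mult; first exact: cv_const.
  apply: wpow_cv => k kG; apply: H; move: GE; rewrite powersetE => /subsetP; apply.
  exact: kG.
by split; apply: sum_cv => G HG'; apply: HG.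
Qed.

Lemma ray_nn e f w : Rayleigh E mu -> e \in E -> f \in E -> e != f -> nnw e f w ->
  qA E mu e f w * qD E mu e f w <= qB E mu e f w * qC E mu e f w.
Proof.
move=> Hr eE fE ef Hw.
pose wi := fun k => if (k == e) || (k == f) then 1 else w k.
pose wn := fun (n : nat) k => wi k + / (INR n + 1).
have Hi : forall k, k \in E -> k != e -> k != f -> w k = wi k.
  by move=> k _ ke kf; rewrite /wi (negbTE ke) (negbTE kf).
case: (q_ext Hi) => -> -> -> ->.
have Hcv : forall k, k \in E -> Un_cv (fun n => wn n k) (wi k).
  move=> k _; rewrite -(Rplus_0_r (wi k)); apply: CV_plus; [exact: cv_const | exact: cv_inv].
case: (q_cv e f Hcv) => HA HB HC HD.
have := Rle_cv_lim _ (CV_mult _ _ _ _ HA HD) (CV_mult _ _ _ _ HB HC); apply => n.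
apply: ray_pos => // k kE.
have Hp : 0 < / (INR n + 1) by apply: Rinv_0_lt_compat; have := pos_INR n; lra.
rewrite /wn /wi; case: ifP => [_|/negbT]; first lra.
rewrite negb_or => /andP[ke kf]; have := Hw k kE ke kf; lra.
Qed.
End Ray.

Lemma frac_le x y p q : 0 < p -> 0 < q -> x * q <= y * p -> x / p <= y / q.
Proof.
move=> Hp Hq H.
have -> : x / p = x * q * / (p * q) by field; lra.
have -> : y / q = y * p * / (p * q) by field; lra.
apply: Rmult_le_compat_r => //; apply: Rlt_le; apply: Rinv_0_lt_compat; nra.
Qed.

Lemma frac_lt x y p q : 0 < p -> 0 < q -> x * q < y * p -> x / p < y / q.
Proof.
move=> Hp Hq H.
have -> : x / p = x * q * / (p * q) by field; lra.
have -> : y / q = y * p * / (p * q) by field; lra.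
apply: Rmult_lt_compat_r => //; apply: Rinv_0_lt_compat; nra.
Qed.

Section Gam.
Variable T : finType.
Variables (E : {set T}) (mu : {set T} -> R).
Hypothesis Hmu : is_measure E mu.
Hypothesis Hmu0 : 0 < mu set0.
Implicit Types (F G : {set T}) (w : T -> R).

Definition nne e w := forall k, k \in E -> k != e -> 0 <= w k.

Lemma memG e G k : (G \in powerset E) && (e \notin G) -> k \in G -> k \in E /\ k != e.
Proof.
move=> /andP[GE eG] kG; split; first by move: GE; rewrite powersetE => /subsetP; apply.
by apply/eqP => ke; move: eG; rewrite -ke kG.
Qed.

Lemma Zdel_ext e w w' : (forall k, k \in E -> k != e -> w k = w' k) -> Zdel E mu e w = Zdel E mu e w'.
Proof.
move=> H; apply: eq_bigr => G HG; congr Rmult; apply: wpow_ext => k kG.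
by case: (memG HG kG) => *; apply: H.
Qed.

Lemma Zcon_ext e w w' : (forall k, k \in E -> k != e -> w k = w' k) -> Zcon E mu e w = Zcon E mu e w'.
Proof.
move=> H; apply: eq_bigr => G HG; congr Rmult; apply: wpow_ext => k kG.
by case: (memG HG kG) => *; apply: H.
Qed.

Lemma gam_ext e w w' : (forall k, k \in E -> k != e -> w k = w' k) ->
  cavity_ratio E mu e w = cavity_ratio E mu e w'.
Proof. by move=> H; rewrite /cavity_ratio (Zdel_ext H) (Zcon_ext H). Qed.

Lemma Zdel_ge e w : nne e w -> mu set0 <= Zdel E mu e w.
Proof.
move=> Hw; rewrite /Zdel (bigD1 set0) /=; last by rewrite powersetE sub0set in_set0.
rewrite wpow0 Rmult_1_r -{1}(Rplus_0_r (mu set0)); apply: Rplus_le_compat_l.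
apply: sum_ge0 => G /andP[HG _]; apply: Rmult_le_pos.
  by apply: Hmu; case/andP: HG; rewrite powersetE.
by apply: wpow_ge0 => k kG; case: (memG HG kG) => *; apply: Hw.
Qed.

Lemma Zdel_gt0 e w : nne e w -> 0 < Zdel E mu e w.
Proof. move=> Hw; have := Zdel_ge Hw; lra. Qed.

Lemma Zcon_ge e w : e \in E -> nne e w -> mu [set e] <= Zcon E mu e w.
Proof.
move=> eE Hw; rewrite /Zcon (bigD1 set0) /=; last by rewrite powersetE sub0set in_set0.
rewrite wpow0 Rmult_1_r setU0 -{1}(Rplus_0_r (mu [set e])); apply: Rplus_le_compat_l.
apply: sum_ge0 => G /andP[HG _]; apply: Rmult_le_pos.
  by apply: Hmu; case/andP: HG; rewrite !powersetE subUset sub1set eE => ->.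
by apply: wpow_ge0 => k kG; case: (memG HG kG) => *; apply: Hw.
Qed.

Lemma Zcon_ge0 e w : e \in E -> nne e w -> 0 <= Zcon E mu e w.
Proof.
move=> eE Hw; apply: sum_ge0 => G HG; apply: Rmult_le_pos.
  by apply: Hmu; case/andP: HG; rewrite !powersetE subUset sub1set eE => ->.
by apply: wpow_ge0 => k kG; case: (memG HG kG) => *; apply: Hw.
Qed.

Lemma gam_ge0 e w : e \in E -> nne e w -> 0 <= cavity_ratio E mu e w.
Proof.
move=> eE Hw; rewrite /cavity_ratio; apply: Rmult_le_pos; first exact: Zcon_ge0.
by apply: Rlt_le; apply: Rinv_0_lt_compat; apply: Zdel_gt0.
Qed.

Definition upd w f x := fun k => if k == f then x else w k.

Lemma gam_upd e f v a b : Rayleigh E mu -> e \in E -> f \in E -> e != f -> nne e v ->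
  0 <= a <= b ->
  cavity_ratio E mu e (upd v f b) <= cavity_ratio E mu e (upd v f a).
Proof.
move=> Hr eE fE ef Hv Hab.
have Hn : nnw E e f v by move=> k kE ke _; apply: Hv.
have Hx : forall x, [/\ qA E mu e f (upd v f x) = qA E mu e f v, qB E mu e f (upd v f x) = qB E mu e f v,
      qC E mu e f (upd v f x) = qC E mu e f v & qD E mu e f (upd v f x) = qD E mu e f v].
  by move=> x; apply: q_ext => k _ _ kf; rewrite /upd (negbTE kf).
rewrite /cavity_ratio !(Zdel_dec mu _ fE ef) !(Zcon_dec mu _ fE ef).
case: (Hx a) => -> -> -> ->; case: (Hx b) => -> -> -> ->.
rewrite /upd !eqxx.
have := ray_nn Hmu Hmu0 Hr eE fE ef Hn; have := qA_ge Hmu Hn.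
have := qB_ge0 Hmu eE Hn; have := qC_ge0 Hmu fE Hn; have := qD_ge0 Hmu eE fE Hn.
set A := qA E mu e f v; set B := qB E mu e f v; set C := qC E mu e f v; set D := qD E mu e f v.
move=> HD HC HB HA Hray.
have Ha : 0 < A + a * C by nra.
have Hb : 0 < A + b * C by nra.
apply: frac_le => //; nra.
Qed.

Lemma gam_anti e w w' : Rayleigh E mu -> e \in E ->
  (forall k, k \in E -> k != e -> 0 <= w k <= w' k) ->
  cavity_ratio E mu e w' <= cavity_ratio E mu e w.
Proof.
move=> Hr eE H.
pose mix (l : seq T) := fun k => if k \in l then w' k else w k.
suff : forall l, cavity_ratio E mu e (mix l) <= cavity_ratio E mu e w.
  move/(_ (enum T)); rewrite (@gam_ext e (mix (enum T)) w') //.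
  by move=> k _ _; rewrite /mix mem_enum.
elim => [|a l IH]; first by rewrite (@gam_ext e (mix [::]) w) //; apply: Rle_refl.
have Hnn : nne e (mix l).
  move=> k kE ke; rewrite /mix; case: ifP => _; have := H k kE ke; lra.
case aE: (a \in E); last first.
  rewrite (@gam_ext e (mix (a :: l)) (mix l)) // => k kE _.
  rewrite /mix in_cons; case: (k =P a) => [ka|_] //=; by rewrite ka aE in kE.
case ae: (a == e).
  rewrite (@gam_ext e (mix (a :: l)) (mix l)) // => k _ ke.
  rewrite /mix in_cons; case: (k =P a) => [ka|_] //=; by rewrite ka ae in ke.
case al: (a \in l).
  rewrite (@gam_ext e (mix (a :: l)) (mix l)) // => k _ _.
  rewrite /mix in_cons; case: (k =P a) => [ka|_] //=; by rewrite ka al.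
apply: Rle_trans IH.
rewrite (@gam_ext e (mix (a :: l)) (upd (mix l) a (w' a))); last first.
  move=> k _ _; rewrite /mix /upd in_cons; case: eqP => [->|] //.
rewrite [X in _ <= X](@gam_ext e (mix l) (upd (mix l) a (w a))); last first.
  move=> k _ _; rewrite /mix /upd; case: eqP => [->|] //; by rewrite al.
apply: gam_upd => //; first by rewrite eq_sym ae.
by apply: H => //; rewrite ae.
Qed.
End Gam.

Lemma dpl_ext f g x l : (forall y, f y = g y) -> derivable_pt_lim f x l -> derivable_pt_lim g x l.
Proof. by move=> H; have -> : g = f by apply: functional_extensionality => y; rewrite H. Qed.

Lemma dpl_sum (I : Type) (r : seq I) (P : pred I) (f f' : I -> R -> R) x :
  (forall i, P i -> derivable_pt_lim (f i) x (f' i x)) ->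
  derivable_pt_lim (fun y => \big[Rplus/R0]_(i <- r | P i) f i y) x
                   (\big[Rplus/R0]_(i <- r | P i) f' i x).
Proof.
move=> H; elim: r => [|a r IH].
  rewrite big_nil; apply: (dpl_ext (f := fct_cte 0)); last exact: derivable_pt_lim_const.
  by move=> y; rewrite big_nil.
rewrite big_cons; case: (boolP (P a)) => Pa.
  apply: (dpl_ext (f := (f a + (fun y => \big[Rplus/R0]_(i <- r | P i) f i y))%F)).
    by move=> y; rewrite big_cons Pa.
  exact: derivable_pt_lim_plus (H a Pa) IH.
by apply: (dpl_ext _ IH) => y; rewrite big_cons (negbTE Pa).
Qed.

Lemma dpl_monom (c : R) (n : nat) x :
  derivable_pt_lim (fun y => c * y ^ n) x (c * (INR n * x ^ Init.Nat.pred n)).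
Proof. exact: (derivable_pt_lim_scal (fun y => y ^ n) c x _ (derivable_pt_lim_pow x n)). Qed.

Lemma xdmonom n x : x * (INR n * x ^ Init.Nat.pred n) = INR n * x ^ n.
Proof. by case: n => [|n] /=; [ring | ring]. Qed.

Section Scale.
Variable T : finType.
Variables (E : {set T}) (mu : {set T} -> R).
Hypothesis Hmu : is_measure E mu.
Hypothesis Hmu0 : 0 < mu set0.
Implicit Types (F G : {set T}) (w : T -> R).

Definition Ncon e w := \big[Rplus/R0]_(G in powerset E | e \notin G) (INR #|G| * mu (e |: G) * wpow w G).
Definition Ndel e w := \big[Rplus/R0]_(G in powerset E | e \notin G) (INR #|G| * mu G * wpow w G).

Lemma cardU1R e G : e \notin G -> INR #|e |: G| = INR #|G| + 1.
Proof. by move=> eG; rewrite cardsU1 eG add1n S_INR. Qed.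

Lemma sizeinc_ineq e w : size_increasing E mu -> e \in E -> pos_weights E w -> w e = 1 ->
  Ndel e w * Zcon E mu e w < (Ncon e w + Zcon E mu e w) * Zdel E mu e w.
Proof.
move=> Hs eE Hw we1.
have := Hs w Hw e eE; rewrite /Usize_e /Usize /Prob.
have HZ : Zpart E mu w = Zdel E mu e w + Zcon E mu e w.
  rewrite /Zpart (split_pow0 _ eE) /Zdel /Zcon -big_split /=; apply: eq_bigr => G /andP[_ eG].
  by rewrite wpowU1 // we1 Rmult_1_l.
have HZe : Zcont E mu w [set e] = Zcon E mu e w.
  rewrite /Zcont big_mkcondr (split_pow0 _ eE) /Zcon; apply: eq_bigr => G /andP[_ eG].
  by rewrite !sub1set setU11 (negbTE eG) wpowU1 // we1 Rmult_1_l Rplus_0_l.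
have HN : \big[Rplus/R0]_(F in powerset E) (INR #|F| * mu F * wpow w F) =
    Ndel e w + (Ncon e w + Zcon E mu e w).
  rewrite (split_pow0 _ eE) /Ndel /Ncon /Zcon -!big_split /=; apply: eq_bigr => G /andP[_ eG].
  by rewrite wpowU1 // we1 cardU1R //; ring.
have HNe : \big[Rplus/R0]_(F in powerset E | e \in F) (INR #|F| * mu F * wpow w F) =
    Ncon e w + Zcon E mu e w.
  rewrite big_mkcondr (split_pow0 _ eE) /Ncon /Zcon -!big_split /=; apply: eq_bigr => G /andP[_ eG].
  by rewrite setU11 (negbTE eG) wpowU1 // we1 cardU1R //; ring.
rewrite HZ HZe HN HNe.
have Hnne : nne E e w by move=> k kE _; apply: Rlt_le; apply: Hw.
have := Zdel_gt0 Hmu Hmu0 Hnne; have := Zcon_ge0 Hmu eE Hnne.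
set D := Zdel E mu e w; set C := Zcon E mu e w; set Nd := Ndel e w; set Nc := Ncon e w.
move=> HC HD H.
have HZp : 0 < D + C by lra.
have H2 : (Nd + (Nc + C)) * C < (Nc + C) * (D + C).
  have := Rmult_lt_compat_r ((D + C) * (D + C)) _ _ (Rmult_lt_0_compat _ _ HZp HZp) H.
  have -> : (Nc + C) / (D + C) * ((D + C) * (D + C)) = (Nc + C) * (D + C) by field; lra.
  have -> : (Nd + (Nc + C)) / (D + C) * (C / (D + C)) * ((D + C) * (D + C)) = (Nd + (Nc + C)) * C
    by field; lra.
  by [].
nra.
Qed.

Definition pl (c : {set T} -> R) e y := \big[Rplus/R0]_(G in powerset E | e \notin G) (c G * y ^ #|G|).
Definition dpl (c : {set T} -> R) e y :=
  \big[Rplus/R0]_(G in powerset E | e \notin G) (c G * (INR #|G| * y ^ Init.Nat.pred #|G|)).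

Lemma pl_deriv c e y : derivable_pt_lim (pl c e) y (dpl c e y).
Proof.
apply: (@dpl_sum _ _ _ (fun G y => c G * y ^ #|G|) (fun G y => c G * (INR #|G| * y ^ Init.Nat.pred #|G|)) y).
by move=> G _; apply: dpl_monom.
Qed.

Lemma ydpl c e y : y * dpl c e y = \big[Rplus/R0]_(G in powerset E | e \notin G) (INR #|G| * c G * y ^ #|G|).
Proof.
rewrite /dpl big_distrr; apply: eq_bigr => G _.
have := xdmonom #|G| y; move: (INR #|G| * y ^ Init.Nat.pred #|G|) => z Hz.
transitivity (c G * (y * z)); [change (y * (c G * z) = c G * (y * z)); ring | rewrite Hz; ring].
Qed.

Lemma Zcon_pl e w y : Zcon E mu e (fun k => y * w k) = pl (fun G => mu (e |: G) * wpow w G) e y.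
Proof. by apply: eq_bigr => G _; rewrite wpow_scale; ring. Qed.

Lemma Zdel_pl e w y : Zdel E mu e (fun k => y * w k) = pl (fun G => mu G * wpow w G) e y.
Proof. by apply: eq_bigr => G _; rewrite wpow_scale; ring. Qed.

Lemma Ncon_pl e w y : Ncon e (fun k => y * w k) =
  \big[Rplus/R0]_(G in powerset E | e \notin G) (INR #|G| * (mu (e |: G) * wpow w G) * y ^ #|G|).
Proof. by apply: eq_bigr => G _; rewrite wpow_scale; ring. Qed.

Lemma Ndel_pl e w y : Ndel e (fun k => y * w k) =
  \big[Rplus/R0]_(G in powerset E | e \notin G) (INR #|G| * (mu G * wpow w G) * y ^ #|G|).
Proof. by apply: eq_bigr => G _; rewrite wpow_scale; ring. Qed.

Lemma Zcon_upd e w x : Zcon E mu e (upd w e x) = Zcon E mu e w.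
Proof. by apply: Zcon_ext => k _ ke; rewrite /upd (negbTE ke). Qed.
Lemma Zdel_upd e w x : Zdel E mu e (upd w e x) = Zdel E mu e w.
Proof. by apply: Zdel_ext => k _ ke; rewrite /upd (negbTE ke). Qed.
Lemma Ncon_upd e w x : Ncon e (upd w e x) = Ncon e w.
Proof.
apply: eq_bigr => G HG; congr Rmult; apply: wpow_ext => k kG.
by case: (memG HG kG) => _ ke; rewrite /upd (negbTE ke).
Qed.
Lemma Ndel_upd e w x : Ndel e (upd w e x) = Ndel e w.
Proof.
apply: eq_bigr => G HG; congr Rmult; apply: wpow_ext => k kG.
by case: (memG HG kG) => _ ke; rewrite /upd (negbTE ke).
Qed.

Lemma gam_scale e w lam : size_increasing E mu -> e \in E ->
  (forall k, k \in E -> k != e -> 0 < w k) -> 1 < lam ->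
  cavity_ratio E mu e w < lam * cavity_ratio E mu e (fun k => lam * w k).
Proof.
move=> Hs eE Hw Hl.
pose cc := fun G => mu (e |: G) * wpow w G.
pose cd := fun G => mu G * wpow w G.
pose phi := ((id * pl cc e) / pl cd e)%F.
have Hpos : forall y, 0 < y -> 0 < pl cd e y.
  move=> y Hy; rewrite -Zdel_pl; apply: Zdel_gt0 => // k kE ke.
  by have := Hw k kE ke; nra.
have Hphi : forall y, 0 < y -> phi y = y * cavity_ratio E mu e (fun k => y * w k).
  by move=> y Hy; rewrite /phi /cavity_ratio Zcon_pl Zdel_pl /mult_fct /div_fct /id /Rdiv /cc /cd; ring.
pose phi' := fun y => ((1 * pl cc e y + y * dpl cc e y) * pl cd e y - dpl cd e y * (y * pl cc e y))
                      / (pl cd e y)².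
have Hd : forall y, 1 <= y <= lam -> derivable_pt_lim phi y (phi' y).
  move=> y Hy; apply: derivable_pt_lim_div.
    exact: derivable_pt_lim_mult (derivable_pt_lim_id y) (pl_deriv cc e y).
    exact: pl_deriv.
  by have := Hpos y ltac:(lra); lra.
case: (MVT_cor2 _ _ _ _ Hl Hd) => c [Hc Hc1].
have Hc0 : 0 < c by lra.
have Hp' : 0 < phi' c.
  rewrite /phi'; apply: Rdiv_lt_0_compat; last by apply: Rsqr_pos_lt; have := Hpos c Hc0; lra.
  pose wc := upd (fun k => c * w k) e 1.
  have Hwc : pos_weights E wc.
    move=> k kE; rewrite /wc /upd; case: ifP => [_|/negbT ke]; first lra.
    by have := Hw k kE ke; nra.
  have := sizeinc_ineq Hs eE Hwc ltac:(by rewrite /wc /upd eqxx).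
  rewrite /wc Zcon_upd Zdel_upd Ncon_upd Ndel_upd Zcon_pl Zdel_pl Ncon_pl Ndel_pl.
  have E1 : c * dpl cc e c = \big[Rplus/R0]_(G in powerset E | e \notin G) (INR #|G| * cc G * c ^ #|G|)
    by rewrite ydpl.
  have E2 : c * dpl cd e c = \big[Rplus/R0]_(G in powerset E | e \notin G) (INR #|G| * cd G * c ^ #|G|)
    by rewrite ydpl.
  rewrite -E1 -E2 -/cc -/cd => H; nra.
have H1 : phi 1 < phi lam.
  have : phi lam - phi 1 > 0 by rewrite Hc; apply: Rmult_lt_0_compat => //; lra.
  lra.
rewrite (Hphi 1 ltac:(lra)) (Hphi lam ltac:(lra)) Rmult_1_l in H1.
rewrite (@gam_ext T E mu e w (fun k => 1 * w k)) // => k _ _; ring.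
Qed.
End Scale.

Section Mu1.
Variable T : finType.
Variables (E : {set T}) (mu : {set T} -> R).
Hypothesis Hmu : is_measure E mu.

Lemma wpow_zero (G : {set T}) : G != set0 -> wpow (fun _ : T => 0) G = 0.
Proof.
case/set0Pn => k kG; rewrite /wpow (big_setD1 k kG) /=; ring.
Qed.

Lemma Zcon_zero e : Zcon E mu e (fun _ => 0) = mu [set e].
Proof.
rewrite /Zcon (bigD1 set0) /=; last by rewrite powersetE sub0set in_set0.
rewrite wpow0 setU0 big1; first ring.
by move=> G /andP[_ G0]; rewrite wpow_zero //; ring.
Qed.

Lemma mu1_pos e : cavity_monotone E mu -> e \in E -> 0 < mu [set e].
Proof.
case=> Hmu0 [Hr Hs] eE.
have H1 : 0 <= mu [set e] by apply: Hmu; rewrite sub1set.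
case: (Rle_lt_or_eq_dec _ _ H1) => // H0.
pose w0 := fun _ : T => 0; pose w1 := fun _ : T => 1.
have Hg := @gam_anti T E mu Hmu Hmu0 e w0 w1 Hr eE ltac:(move=> *; rewrite /w0 /w1; lra).
have Hn1 : nne E e w1 by move=> *; rewrite /w1; lra.
have HD := Zdel_gt0 Hmu Hmu0 Hn1.
have HC := Zcon_ge0 Hmu eE Hn1.
have HC0 : Zcon E mu e w1 = 0.
  move: Hg; rewrite /cavity_ratio /w0 Zcon_zero -H0 /Rdiv Rmult_0_l => Hg.
  apply: Rle_antisym => //.
  have : 0 < / Zdel E mu e w1 by apply: Rinv_0_lt_compat.
  move=> Hi; nra.
have Hp1 : pos_weights E w1 by move=> *; rewrite /w1; lra.
have := sizeinc_ineq Hmu Hmu0 Hs eE Hp1 erefl.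
rewrite HC0 Rmult_0_r Rplus_0_r => Hlt.
have HN : Ncon E mu e w1 <= INR #|T| * Zcon E mu e w1.
  rewrite /Zcon big_distrr; apply: sum_le => G /andP[HG eG] /=.
  have Hm : 0 <= mu (e |: G) by apply: Hmu; move: HG; rewrite !powersetE subUset sub1set eE => ->.
  have Hw : 0 <= wpow w1 G by apply: wpow_ge0 => *; rewrite /w1; lra.
  have Hc : INR #|G| <= INR #|T| by apply: le_INR; apply/leP; apply: max_card.
  change (INR #|G| * mu (e |: G) * wpow w1 G <= INR #|T| * (mu (e |: G) * wpow w1 G)); have := Rmult_le_pos _ _ Hm Hw; nra.
have HN0 : 0 <= Ncon E mu e w1.
  apply: sum_ge0 => G /andP[HG eG].
  have Hm : 0 <= mu (e |: G) by apply: Hmu; move: HG; rewrite !powersetE subUset sub1set eE => ->.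
  have Hw : 0 <= wpow w1 G by apply: wpow_ge0 => *; rewrite /w1; lra.
  apply: Rmult_le_pos => //; apply: Rmult_le_pos => //; exact: pos_INR.
rewrite HC0 Rmult_0_r in HN.
nra.
Qed.
End Mu1.

Unset Implicit Arguments.

Lemma cv_inv_lim (a : nat -> R) l : l <> 0 -> Un_cv a l -> Un_cv (fun n => / a n) (/ l).
Proof.
move=> Hl Ha.
have Hc : continuity_pt (/ id)%F l.
  by apply: continuity_pt_inv => //; apply: derivable_continuous_pt; apply: derivable_pt_id.
exact: (continuity_seq _ _ _ Hc Ha).
Qed.

Lemma cv_shift (a : nat -> R) l : Un_cv a l -> Un_cv (fun n => a n.+1) l.
Proof. move=> H eps He; case: (H eps He) => N HN; exists N => n Hn; apply: HN; lia. Qed.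

Lemma argmax (X : eqType) (s : seq X) (f : X -> R) x0 : x0 \in s ->
  exists p, p \in s /\ forall q, q \in s -> f q <= f p.
Proof.
elim: s x0 => [|a s IH] x0 //.
case: (boolP (s == [::])) => [/eqP -> _|].
  exists a; split; first by rewrite inE eqxx.
  by move=> q; rewrite inE => /eqP ->; apply: Rle_refl.
case: s IH => [//|b s'] IH _ _.
case: (IH b) => [|p [ps Hp]]; first by rewrite inE eqxx.
case: (Rle_lt_dec (f a) (f p)) => Hap.
  exists p; split; first by rewrite inE ps orbT.
  by move=> q; rewrite inE => /orP[/eqP ->|/Hp].
exists a; split; first by rewrite inE eqxx.
move=> q; rewrite inE => /orP[/eqP ->|/Hp]; [apply: Rle_refl | lra].
Qed.

Lemma sandwich (a b c x eps : R) : Rabs (a - x) < eps -> Rabs (b - x) < eps -> a <= c <= b ->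
  Rabs (c - x) < eps.
Proof.
move=> Ha Hb Hc; move/Rabs_def2: Ha => [Ha1 Ha2]; move/Rabs_def2: Hb => [Hb1 Hb2].
apply: Rabs_def1; lra.
Qed.

Section Net.
Variable V : finType.
Variables (adj : rel V) (mu : V -> {set V} -> R) (t : R).
Hypothesis Hnet : cavity_monotone_network adj mu.
Hypothesis Ht : 0 < t.

Definition Fop := scaled_cavity_op adj mu t.
Definition nn (x : V -> V -> R) := forall i j, adj i j -> 0 <= x i j.
Definition le (x y : V -> V -> R) := forall i j, adj i j -> x i j <= y i j.

Lemma adj_sym i j : adj i j -> adj j i.
Proof. by case: Hnet => [[[Hs _] _] _]; rewrite Hs. Qed.

Lemma memN i k : (k \in nbhd adj i) = adj i k.
Proof. by rewrite /nbhd in_set. Qed.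

Lemma Hmeas i : is_measure (nbhd adj i) (mu i).
Proof. by case: Hnet => [[_ H] _]. Qed.

Lemma Hcm i : cavity_monotone (nbhd adj i) (mu i).
Proof. by case: Hnet => _ H. Qed.

Lemma Hmu0 i : 0 < mu i set0.
Proof. by case: (Hcm i). Qed.

Lemma loc_nne x i j : nn x -> nne (nbhd adj i) j (fun k => x k i).
Proof. by move=> Hx k; rewrite memN => Hk _; apply: Hx; apply: adj_sym. Qed.

Lemma Fop_ext x y i j : (forall a b, adj a b -> x a b = y a b) -> Fop x i j = Fop y i j.
Proof.
move=> H; rewrite /Fop /scaled_cavity_op /cavity_op; congr Rmult.
by apply: gam_ext => k; rewrite memN => Hk _; apply: H; apply: adj_sym.
Qed.

Lemma Fop_nn x : nn x -> nn (Fop x).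
Proof.
move=> Hx i j Hij; rewrite /Fop /scaled_cavity_op /cavity_op.
apply: Rmult_le_pos; first lra.
apply: (gam_ge0 (Hmeas i) (Hmu0 i)); [by rewrite memN | exact: loc_nne].
Qed.

Lemma Fop_pos x : nn x -> forall i j, adj i j -> 0 < Fop x i j.
Proof.
move=> Hx i j Hij; rewrite /Fop /scaled_cavity_op /cavity_op /cavity_ratio.
have jE : j \in nbhd adj i by rewrite memN.
apply: Rmult_lt_0_compat => //; apply: Rdiv_lt_0_compat.
  have := Zcon_ge (Hmeas i) jE (loc_nne x i j Hx); have := mu1_pos (Hmeas i) (Hcm i) jE; lra.
by have := Zdel_gt0 (Hmeas i) (Hmu0 i) (loc_nne x i j Hx).
Qed.

Lemma Fop_anti x y : nn x -> le x y -> le (Fop y) (Fop x).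
Proof.
move=> Hx Hxy i j Hij; rewrite /Fop /scaled_cavity_op /cavity_op.
apply: Rmult_le_compat_l; first lra.
case: (Hcm i) => _ [Hr _].
have jE : j \in nbhd adj i by rewrite memN.
have Hb : forall k, k \in nbhd adj i -> k != j -> 0 <= x k i <= y k i.
  move=> k; rewrite memN => Hk _; have Hki := adj_sym _ _ Hk; split; [exact: Hx | exact: Hxy].
by have := gam_anti (Hmeas i) (Hmu0 i) Hr jE Hb.
Qed.

Lemma Fop_cv (xs : nat -> V -> V -> R) x : nn x ->
  (forall a b, adj a b -> Un_cv (fun n => xs n a b) (x a b)) ->
  forall i j, adj i j -> Un_cv (fun n => Fop (xs n) i j) (Fop x i j).
Proof.
move=> Hx H i j Hij; rewrite /Fop /scaled_cavity_op /cavity_op /cavity_ratio.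
apply: CV_mult; first exact: cv_const.
have Hk : forall k, k \in nbhd adj i -> Un_cv (fun n => xs n k i) (x k i).
  by move=> k; rewrite memN => Hk; apply: H; apply: adj_sym.
have HG : forall (X : {set V} -> {set V}) G, G \in powerset (nbhd adj i) ->
    Un_cv (fun n => mu i (X G) * wpow (fun k => xs n k i) G) (mu i (X G) * wpow (fun k => x k i) G).
  move=> X G HG; apply: CV_mult; first exact: cv_const.
  apply: (wpow_cv (wn := fun n k => xs n k i)) => k kG; apply: Hk.
  by move: HG; rewrite powersetE => /subsetP; apply.
apply: CV_mult.
  by apply: sum_cv => G /andP[HG' _]; apply: (HG (fun G => j |: G)).
apply: cv_inv_lim.
  have := Zdel_gt0 (Hmeas i) (Hmu0 i) (loc_nne x i j Hx); lra.
by apply: sum_cv => G /andP[HG' _]; apply: (HG id).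
Qed.

Lemma Fop_scale x lam : (forall a b, adj a b -> 0 < x a b) -> 1 < lam ->
  forall i j, adj i j -> Fop x i j < lam * Fop (fun a b => lam * x a b) i j.
Proof.
move=> Hx Hl i j Hij; rewrite /Fop /scaled_cavity_op /cavity_op.
case: (Hcm i) => _ [_ Hs].
have := gam_scale (Hmeas i) (Hmu0 i) (w := fun k => x k i) Hs (e := j) ltac:(by rewrite memN) _ Hl.
have Hw : forall k, k \in nbhd adj i -> k != j -> 0 < x k i.
  by move=> k; rewrite memN => Hk _; apply: Hx; apply: adj_sym.
move/(_ Hw) => H; nra.
Qed.

Definition z n := iter n Fop (fun _ _ => 0).

Lemma z_nn n : nn (z n).
Proof.
case: n => [|n]; first by move=> i j _; rewrite /z /=; lra.
by rewrite /z iterS; apply: Fop_nn; elim: n => [|n IH]; [move=> i j _ /=; lra| rewrite iterS; apply: Fop_nn; exact: IH].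
Qed.

Lemma zS n : z n.+1 = Fop (z n).
Proof. by rewrite /z iterS. Qed.

Lemma le_refl x : le x x.
Proof. by move=> i j _; lra. Qed.

Lemma le_trans x y w : le x y -> le y w -> le x w.
Proof. by move=> H1 H2 i j Hij; apply: Rle_trans (H1 i j Hij) (H2 i j Hij). Qed.

Lemma z_mono n : le (z n.*2) (z n.*2.+2) /\ le (z n.*2) (z n.*2.+1).
Proof.
elim: n => [|n [IH1 IH2]].
  split; move=> i j Hij; [have := z_nn 2 i j Hij | have := z_nn 1 i j Hij]; rewrite /z /=; lra.
rewrite doubleS.
have H3 : le (z n.*2.+3) (z n.*2.+1) by rewrite (zS n.*2.+2) (zS n.*2); exact: (Fop_anti _ _ (z_nn _) IH1).
have H4 : le (z n.*2.+2) (z n.*2.+1) by rewrite (zS n.*2.+1) (zS n.*2); exact: (Fop_anti _ _ (z_nn _) IH2).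
split.
  by rewrite (zS n.*2.+3) (zS n.*2.+1); exact: (Fop_anti _ _ (z_nn _) H3).
by rewrite (zS n.*2.+2) (zS n.*2.+1); exact: (Fop_anti _ _ (z_nn _) H4).
Qed.

Definition lo n := z n.*2.
Definition up n := z n.*2.+1.

Lemma lo_incr n : le (lo n) (lo n.+1).
Proof. by rewrite /lo doubleS; case: (z_mono n). Qed.

Lemma up_decr n : le (up n.+1) (up n).
Proof.
rewrite /up doubleS (zS n.*2.+2) (zS n.*2); apply: (Fop_anti _ _ (z_nn _)).
by case: (z_mono n).
Qed.

Lemma lo_up n : le (lo n) (up n).
Proof. by case: (z_mono n). Qed.

Lemma up_le_up0 n : le (up n) (up 0).
Proof. elim: n => [|n IH]; [exact: le_refl | exact: le_trans (up_decr n) IH]. Qed.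

Lemma lo_mono m n : (m <= n)%N -> le (lo m) (lo n).
Proof.
elim: n => [|n IH]; first by rewrite leqn0 => /eqP ->; apply: le_refl.
rewrite leq_eqVlt => /orP[/eqP ->|]; first exact: le_refl.
by rewrite ltnS => /IH H; apply: le_trans H (lo_incr n).
Qed.

Lemma ex_lo i j : adj i j -> exists l, Un_cv (fun n => lo n i j) l.
Proof.
move=> Hij.
have Hub : has_ub (fun n => lo n i j).
  exists (up 0 i j) => x [n ->]; exact: Rle_trans (lo_up n i j Hij) (up_le_up0 n i j Hij).
have [l Hl] := growing_cv (fun n => lo n i j) (fun n => lo_incr n i j Hij) Hub.
by exists l.
Qed.

Lemma ex_up i j : adj i j -> exists l, Un_cv (fun n => up n i j) l.
Proof.
move=> Hij.
have Hlb : has_lb (fun n => up n i j).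
  exists 0 => x [n ->]; have := z_nn n.*2.+1 i j Hij; rewrite /opp_seq /up; lra.
have [l Hl] := decreasing_cv (fun n => up n i j) (fun n => up_decr n i j Hij) Hlb.
by exists l.
Qed.

Definition lst i j := epsilon (inhabits 0) (fun l => adj i j -> Un_cv (fun n => lo n i j) l).
Definition ust i j := epsilon (inhabits 0) (fun l => adj i j -> Un_cv (fun n => up n i j) l).

Lemma lst_cv i j : adj i j -> Un_cv (fun n => lo n i j) (lst i j).
Proof.
move=> Hij; apply: (epsilon_spec (inhabits 0) (fun l => adj i j -> Un_cv (fun n => lo n i j) l)) => //.
by case: (ex_lo i j Hij) => l Hl; exists l.
Qed.

Lemma ust_cv i j : adj i j -> Un_cv (fun n => up n i j) (ust i j).
Proof.
move=> Hij; apply: (epsilon_spec (inhabits 0) (fun l => adj i j -> Un_cv (fun n => up n i j) l)) => //.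
by case: (ex_up i j Hij) => l Hl; exists l.
Qed.

Lemma lst_nn : nn lst.
Proof.
move=> i j Hij; apply: (Rle_cv_lim _ (@cv_const 0) (lst_cv i j Hij)) => n.
exact: z_nn.
Qed.

Lemma lst_pos i j : adj i j -> 0 < lst i j.
Proof.
move=> Hij.
have H1 : 0 < lo 1 i j by rewrite /lo (zS 1); apply: Fop_pos => //; apply: z_nn.
suff : lo 1 i j <= lst i j by lra.
apply: (Rle_cv_lim _ (@cv_const (lo 1 i j)) (cv_shift _ _ (lst_cv i j Hij))) => n.
by apply: (lo_mono 1 n.+1).
Qed.

Lemma lst_le_ust i j : adj i j -> lst i j <= ust i j.
Proof.
move=> Hij; apply: (Rle_cv_lim _ (lst_cv i j Hij) (ust_cv i j Hij)) => n.
exact: lo_up.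
Qed.

Lemma ust_nn : nn ust.
Proof. move=> i j Hij; have := lst_nn i j Hij; have := lst_le_ust i j Hij; lra. Qed.

Lemma ust_fix i j : adj i j -> ust i j = Fop lst i j.
Proof.
move=> Hij; apply: (UL_sequence _ _ _ (ust_cv i j Hij)).
apply: (@Un_cv_ext (fun n => Fop (lo n) i j)); first by move=> n; rewrite /up /lo zS.
apply: Fop_cv => //; first exact: lst_nn.
exact: lst_cv.
Qed.

Lemma lst_fix i j : adj i j -> lst i j = Fop ust i j.
Proof.
move=> Hij; apply: (UL_sequence _ _ _ (cv_shift _ _ (lst_cv i j Hij))).
apply: (@Un_cv_ext (fun n => Fop (up n) i j)); first by move=> n; rewrite /up /lo doubleS zS.
apply: Fop_cv => //; first exact: ust_nn.
exact: ust_cv.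
Qed.

Lemma ust_le_lst i j : adj i j -> ust i j <= lst i j.
Proof.
move=> Hij; apply: Rnot_lt_le => Hlt.
pose r := fun p : V * V => ust p.1 p.2 / lst p.1 p.2.
pose s := [seq p <- enum (@predT (V * V)%type) | adj p.1 p.2].
have Hs : (i, j) \in s by rewrite mem_filter /= Hij mem_enum.
case: (argmax _ _ r _ Hs) => [[a b] [Hab Hmax]].
have Hadj : adj a b by move: Hab; rewrite mem_filter => /andP[].
pose lam := r (a, b).
have Hlp := lst_pos i j Hij.
have Hr1 : 1 < r (i, j).
  rewrite /r /=; apply: (Rmult_lt_reg_r (lst i j)) => //.
  rewrite Rmult_1_l /Rdiv Rmult_assoc Rinv_l; lra.
have Hl1 : 1 < lam by have := Hmax (i, j) Hs; rewrite /lam; lra.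
have Hle : le ust (fun a b => lam * lst a b).
  move=> a' b' Ha'; have Hq : (a', b') \in s by rewrite mem_filter /= Ha' mem_enum.
  have := Hmax _ Hq; rewrite /r /= => H.
  have Hp := lst_pos a' b' Ha'.
  have -> : ust a' b' = ust a' b' / lst a' b' * lst a' b' by field; lra.
  by rewrite /lam /r /=; apply: Rmult_le_compat_r; lra.
have H1 := Fop_anti _ _ ust_nn Hle a b Hadj.
rewrite -(lst_fix a b Hadj) in H1.
have H2 := Fop_scale lst lam lst_pos Hl1 a b Hadj.
rewrite -(ust_fix a b Hadj) in H2.
have Hlpab := lst_pos a b Hadj.
have Hlam : lam * lst a b = ust a b by rewrite /lam /r /=; field; lra.
nra.
Qed.

Lemma iter_sandwich x0 : nn x0 -> forall n,
  le (lo n) (iter n.*2.+1 Fop x0) /\ le (iter n.*2.+1 Fop x0) (up n).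
Proof.
move=> H0.
have Hnn : forall k, nn (iter k Fop x0).
  by case=> [|k] //; rewrite iterS; apply: Fop_nn; elim: k => [|k IH] //; rewrite iterS; apply: Fop_nn.
elim=> [|n [IH1 IH2]].
  have Hz : nn (fun _ _ : V => 0) by move=> *; lra.
  have Hl : le (fun _ _ => 0) x0 by move=> a b Hab; exact: H0.
  split => i j Hij.
    have := Fop_nn _ H0 i j Hij; rewrite /lo /z /=; lra.
  by have := Fop_anti _ _ Hz Hl i j Hij.
have Hy2l : le (lo n.+1) (iter n.*2.+2 Fop x0).
  by rewrite /lo doubleS zS -/(up n) iterS; apply: Fop_anti => //; exact: Hnn.
have Hy2u : le (iter n.*2.+2 Fop x0) (up n).
  by rewrite /up zS -/(lo n) iterS; apply: Fop_anti => //; exact: z_nn.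
split.
  by rewrite doubleS iterS {1}/lo doubleS zS -/(up n); apply: Fop_anti => //; exact: Hnn.
by rewrite doubleS iterS /up doubleS zS; apply: Fop_anti => //; exact: z_nn.
Qed.

Lemma iter_cv x0 : nn x0 -> forall i j, adj i j ->
  Un_cv (fun k => iter k Fop x0 i j) (lst i j).
Proof.
move=> H0 i j Hij eps He.
case: (lst_cv i j Hij eps He) => N1 HN1.
have Hu : Un_cv (fun n => up n i j) (lst i j).
  have -> : lst i j = ust i j by have := lst_le_ust i j Hij; have := ust_le_lst i j Hij; lra.
  exact: ust_cv.
case: (Hu eps He) => N2 HN2.
exists ((N1 + N2).*2.+1)%nat => m Hm.
have Hm' : ((N1 + N2).*2.+1 <= m)%N by apply/leP.
pose n := (m.-1)./2.
have Hn : (N1 + N2 <= n)%N.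
  have := odd_double_half m.-1; rewrite /n; lia.
have HS := iter_sandwich _ H0 n.
have Hb : lo n i j <= iter m Fop x0 i j <= up n i j.
  have := odd_double_half m.-1; case Ho: (odd m.-1) => /= Hd.
    have Hm2 : m = n.*2.+2 by rewrite /n; lia.
    rewrite Hm2.
    have Hnn : forall k, nn (iter k Fop x0).
      by case=> [|k] //; rewrite iterS; apply: Fop_nn; elim: k => [|k IH] //; rewrite iterS; apply: Fop_nn.
    case: HS => H1 H2.
    split.
      apply: Rle_trans (lo_incr n i j Hij) _.
      rewrite /lo doubleS zS -/(up n) iterS; apply: (Fop_anti _ _ (Hnn _) H2 i j Hij).
    rewrite iterS /up zS -/(lo n); apply: (Fop_anti _ _ (z_nn _) H1 i j Hij).
  have Hm2 : m = n.*2.+1 by rewrite /n; lia.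
  by rewrite Hm2; case: HS => H1 H2; split; [apply: H1 | apply: H2].
apply: (sandwich _ _ _ _ _ (HN1 n _) (HN2 n _) Hb); apply/leP; lia.
Qed.
End Net.

Theorem mainTheorem4 (V : finType) (adj : rel V) (mu : V -> {set V} -> R) (t : R) :
  cavity_monotone_network adj mu -> 0 < t ->
  exists x : V -> V -> R,
    nonneg_config adj x /\
    (forall i j, adj i j -> x i j = scaled_cavity_op adj mu t x i j) /\
    (forall y : V -> V -> R, nonneg_config adj y ->
       (forall i j, adj i j -> y i j = scaled_cavity_op adj mu t y i j) ->
       forall i j, adj i j -> y i j = x i j) /\
    (forall x0 : V -> V -> R, nonneg_config adj x0 ->
       forall i j, adj i j ->
         Un_cv (fun k => iter k (scaled_cavity_op adj mu t) x0 i j) (x i j)).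
Proof.
move=> Hnet Ht.
have Heq : forall i j, adj i j -> ust V adj mu t i j = lst V adj mu t i j.
  move=> i j Hij; have := lst_le_ust V adj mu t Hnet Ht i j Hij.
  have := ust_le_lst V adj mu t Hnet Ht i j Hij; lra.
have Hcv := iter_cv V adj mu t Hnet Ht.
exists (lst V adj mu t); split; first exact: (lst_nn V adj mu t Hnet Ht).
split.
  move=> i j Hij; rewrite (lst_fix V adj mu t Hnet Ht i j Hij).
  by apply: (Fop_ext V adj mu t Hnet) => a b Hab; rewrite Heq.
split; last exact: Hcv.
move=> y Hy Hfix i j Hij.
have Hit : forall k, forall a b, adj a b -> iter k (scaled_cavity_op adj mu t) y a b = y a b.
  elim=> [|k IH] a b Hab //; rewrite iterS (Hfix a b Hab).
  exact: (Fop_ext V adj mu t Hnet).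
have H : Un_cv (fun _ => y i j) (lst V adj mu t i j).
  move=> eps He; case: (Hcv y Hy i j Hij eps He) => N HN; exists N => n Hn.
  rewrite -(Hit n i j Hij); exact: HN n Hn.
exact: (UL_sequence _ _ _ (cv_const (y i j)) H).
Qed.
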